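(* Suppose Assumption A holds with $\beta,\gamma\in(0,\infty)$, fix $\mu>0$ and $\sigma\in\mathcal X$, and let $\pi^{\mu,\sigma}$ be a perturbed equilibrium. Run MD-SP with full feedback and constant learning rate $$\eta\in\Big(0,\frac{2\mu\gamma\rho^2}{\mu^2\gamma\rho^2(\gamma+2\beta)+8L^2}\Big).$$ Then for every initial profile $\pi^0\in\mathcal X$ and every $t\ge1$, $$D_\psi(\pi^{\mu,\sigma},\pi^t)\le D_\psi(\pi^{\mu,\sigma},\pi^0)\Big(1-\frac{\eta\mu\gamma}{2}\Big)^t.$$
   Context: Game. Let $N\ge1$. For each $i\in[N]$, $\mathcal X_i\subseteq\mathbb R^{d_i}$ is a nonempty compact convex set, and $\mathcal X=\prod_i\mathcal X_i$. Each $v_i:\mathcal X\to\mathbb R$ is differentiable, with block gradient $\nabla_{\pi_i}v_i$. The norm is Euclidean, with $\|\pi\|^2=\sum_i\|\pi_i\|^2$. The game is monotone: $\sum_i\langle\nabla_{\pi_i}v_i(\pi)-\nabla_{\pi_i}v_i(\pi'),\pi_i-\pi_i'\rangle\le0$. The game is $L$-smooth: $\sum_i\|\nabla_{\pi_i}v_i(\pi)-\nabla_{\pi_i}v_i(\pi')\|^2\le L^2\|\pi-\pi'\|^2$. Regularizer. $\psi:\mathcal X_i\to\mathbb R$ is differentiable on $\mathcal X_i$ and $\rho$-strongly convex with respect to $\|\cdot\|$ ($\rho>0$). Bregman divergence: $D_\psi(x,y)=\psi(x)-\psi(y)-\langle\nabla\psi(y),x-y\rangle$, and $D_\psi(\pi,\pi')=\sum_iD_\psi(\pi_i,\pi_i')$.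 Perturbation. $G:\mathcal X_i\times\mathcal X_i\to[0,\infty)$ is differentiable in its first argument, with gradient $\nabla_{\pi_i}G$ in that argument. $G(\cdot,\sigma_i)$ is strictly convex with minimum value $0$ at $\sigma_i$. For $\mu>0$ and $\sigma\in\mathcal X$, $\pi^{\mu,\sigma}$ is a profile with $\pi_i^{\mu,\sigma}\in\arg\max_{\pi_i}\{v_i(\pi_i,\pi^{\mu,\sigma}_{-i})-\mu G(\pi_i,\sigma_i)\}$ for all $i$. Assumption A: for all $\sigma_i,\pi_i,\pi_i'\in\mathcal X_i$, $$\gamma D_\psi(\pi_i',\pi_i)\le G(\pi_i',\sigma_i)-G(\pi_i,\sigma_i)-\langle\nabla_{\pi_i}G(\pi_i,\sigma_i),\pi_i'-\pi_i\rangle\le\beta D_\psi(\pi_i',\pi_i).$$ MD-SP with full feedback: $$\pi_i^{t+1}=\arg\max_{x\in\mathcal X_i}\{\eta_t\langle\nabla_{\pi_i}v_i(\pi^t)-\mu\nabla_{\pi_i}G(\pi_i^t,\sigma_i),x\rangle-D_\psi(x,\pi_i^t)\}.$$ *)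

(* Defs.v *)
From HB Require Import structures.
From mathcomp Require Import all_boot all_order all_algebra.
From mathcomp Require Import all_classical all_reals all_analysis.
Set Implicit Arguments. Unset Strict Implicit. Unset Printing Implicit Defensive.
Import Order.TTheory GRing.Theory Num.Theory.
Local Open Scope ring_scope.
Local Open Scope classical_set_scope.

Section Defs.
Context {R : realType}.

Definition dotv {n} (u w : 'rV[R]_n) : R := \sum_(j < n) u 0 j * w 0 j.
Definition sqnorm {n} (u : 'rV[R]_n) : R := dotv u u.
Definition enorm {n} (u : 'rV[R]_n) : R := Num.sqrt (sqnorm u).

Definition convexS {n} (S : set 'rV[R]_n) : Prop :=
  forall x y, S x -> S y -> forall l : R, 0 <= l <= 1 -> S (l *: x + (1 - l) *: y).

Definition compactS {n} (S : set 'rV[R]_n) : Prop :=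
  @compact ('rV[R]_n : normedModType R) S.

Definition has_grad_within {n} (S : set 'rV[R]_n) (f : 'rV[R]_n -> R)
    (g : 'rV[R]_n) (x : 'rV[R]_n) : Prop :=
  forall eps : R, 0 < eps -> exists2 delta : R, 0 < delta &
    forall y, S y -> enorm (y - x) < delta ->
      `| f y - f x - dotv g (y - x) | <= eps * enorm (y - x).

Definition strongly_convex_on {n} (S : set 'rV[R]_n) (f : 'rV[R]_n -> R) (rho : R) : Prop :=
  forall x y, S x -> S y -> forall l : R, 0 <= l <= 1 ->
    f (l *: x + (1 - l) *: y) <=
      l * f x + (1 - l) * f y - rho / 2 * l * (1 - l) * sqnorm (x - y).

Definition strictly_convex_on {n} (S : set 'rV[R]_n) (f : 'rV[R]_n -> R) : Prop :=
  forall x y, S x -> S y -> x != y -> forall l : R, 0 < l < 1 ->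
    f (l *: x + (1 - l) *: y) < l * f x + (1 - l) * f y.

Definition bregman {n} (psi : 'rV[R]_n -> R) (gpsi : 'rV[R]_n -> 'rV[R]_n)
    (x y : 'rV[R]_n) : R :=
  psi x - psi y - dotv (gpsi y) (x - y).

Definition is_maximizer {n} (S : set 'rV[R]_n) (f : 'rV[R]_n -> R) (x : 'rV[R]_n) : Prop :=
  S x /\ forall y, S y -> f y <= f x.

Definition profile (N : nat) (d : 'I_N -> nat) := forall i : 'I_N, 'rV[R]_(d i).

Definition in_profile {N} {d : 'I_N -> nat} (X : forall i, set 'rV[R]_(d i))
    (p : profile d) : Prop := forall i, X i (p i).

Definition upd {N} {d : 'I_N -> nat} (p : profile d) (i : 'I_N) (x : 'rV[R]_(d i))
  : profile d := @dfwith 'I_N (fun j => 'rV[R]_(d j)) p i x.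

Definition bregman_prof {N} {d : 'I_N -> nat}
    (psi : forall i, 'rV[R]_(d i) -> R) (gpsi : forall i, 'rV[R]_(d i) -> 'rV[R]_(d i))
    (p q : profile d) : R :=
  \sum_(i < N) bregman (psi i) (gpsi i) (p i) (q i).

End Defs.
Arguments upd {R N d} p i x.

(* Main.v *)
Require Import Defs.
From HB Require Import structures.
From mathcomp Require Import all_boot all_order all_algebra.
From mathcomp Require Import all_classical all_reals all_analysis.
From mathcomp Require Import lra.
Import Order.TTheory GRing.Theory Num.Theory.
Local Open Scope ring_scope.
Local Open Scope classical_set_scope.

Section Helpers.
Context {R : realType}.
Context {n : nat}.
Implicit Types u w z : 'rV[R]_n.

Lemma dotvC u w : dotv u w = dotv w u.
Proof. by apply: eq_bigr => j _; rewrite mulrC. Qed.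
Lemma dotvDl u u' w : dotv (u + u') w = dotv u w + dotv u' w.
Proof. rewrite /dotv -big_split; apply: eq_bigr => j _; by rewrite mxE mulrDl. Qed.
Lemma dotvZl (a : R) u w : dotv (a *: u) w = a * dotv u w.
Proof. rewrite /dotv mulr_sumr; apply: eq_bigr => j _; by rewrite mxE mulrA. Qed.
Lemma dotvNl u w : dotv (- u) w = - dotv u w.
Proof. rewrite -scaleN1r dotvZl; lra. Qed.
Lemma dotvBl u u' w : dotv (u - u') w = dotv u w - dotv u' w.
Proof. by rewrite dotvDl dotvNl. Qed.
Lemma dotvDr u w w' : dotv u (w + w') = dotv u w + dotv u w'.
Proof. by rewrite dotvC dotvDl !(dotvC u). Qed.
Lemma dotvZr (a : R) u w : dotv u (a *: w) = a * dotv u w.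
Proof. by rewrite dotvC dotvZl dotvC. Qed.
Lemma dotvNr u w : dotv u (- w) = - dotv u w.
Proof. by rewrite dotvC dotvNl dotvC. Qed.
Lemma dotvBr u w w' : dotv u (w - w') = dotv u w - dotv u w'.
Proof. by rewrite dotvDr dotvNr. Qed.
Lemma sqnorm_ge0 u : 0 <= sqnorm u.
Proof. apply: sumr_ge0 => j _; exact: sqr_ge0. Qed.
Lemma enorm_ge0 u : 0 <= enorm u.
Proof. exact: sqrtr_ge0. Qed.
Lemma enormZ (l : R) u : 0 <= l -> enorm (l *: u) = l * enorm u.
Proof.
move=> hl; rewrite /enorm /sqnorm dotvZl dotvZr mulrA -expr2 sqrtrM ?sqr_ge0 //.
by rewrite sqrtr_sqr ger0_norm.
Qed.
Lemma comb_sub (l : R) (x y : 'rV[R]_n) : l *: x + (1 - l) *: y - y = l *: (x - y).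
Proof. by rewrite scalerBl scale1r scalerBr addrA addrAC addrK. Qed.


Lemma first_order {S : set 'rV[R]_n} {f g x} :
  convexS S -> is_maximizer S f x -> has_grad_within S f g x ->
  forall z, S z -> dotv g (z - x) <= 0.
Proof.
move=> cS [Sx mx] hg z Sz.
rewrite leNgt; apply/negP => hA.
set A := dotv g (z - x) in hA.
set nn := enorm (z - x).
have nn0 : 0 <= nn by exact: enorm_ge0.
have e0 : 0 < A / (nn + 1) by rewrite divr_gt0 // ltr_pwDr.
have [delta d0 hd] := hg _ e0.
set l := Num.min 1 (delta / (nn + 1)).
have l0 : 0 < l by rewrite lt_min ltr01 divr_gt0 // ltr_pwDr.
have l1 : l <= 1 by rewrite ge_min lexx.
have l2 : l <= delta / (nn + 1) by rewrite ge_min lexx orbT.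
have Sy := cS z x Sz Sx l (andb_true_intro (conj (ltW l0) l1)).
have := hd _ Sy.
rewrite comb_sub enormZ ?(ltW l0) // dotvZr -/A -/nn.
have hlt : l * nn < delta.
  have : l * nn <= delta / (nn + 1) * nn by rewrite ler_wpM2r.
  move=> h; apply: (le_lt_trans h).
  rewrite mulrAC ltr_pdivrMr ?ltr_pwDr //; lra.
move=> /(_ hlt) habs.
have fy := mx _ Sy.
have := ler_normlW habs.
move: (ler_norml (f (l *: z + (1 - l) *: x) - f x - l * A) (A / (nn + 1) * (l * nn))).
rewrite habs => /esym/andP [h1 _] _.
have : A / (nn + 1) * (l * nn) < l * A.
  rewrite mulrCA ltr_pM2l // mulrAC ltr_pdivrMr ?ltr_pwDr //.
  rewrite ltr_pM2l //; lra.
lra.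
Qed.

Lemma grad_affine (S : set 'rV[R]_n) f g x (h : 'rV[R]_n -> R) (c : R) a :
  has_grad_within S f g x -> (forall y, h y = c - f y + dotv a y) ->
  has_grad_within S h (a - g) x.
Proof.
move=> hg hh e e0; have [d d0 hd] := hg e e0; exists d => // y Sy hy.
rewrite !hh dotvBl.
have -> : c - f y + dotv a y - (c - f x + dotv a x) - (dotv a (y - x) - dotv g (y - x))
  = - (f y - f x - dotv g (y - x)) by rewrite dotvBr; lra.
by rewrite normrN; apply: hd.
Qed.

Lemma grad_sub (S : set 'rV[R]_n) f1 f2 g1 g2 x (m : R) :
  has_grad_within S f1 g1 x -> has_grad_within S f2 g2 x ->
  has_grad_within S (fun y => f1 y - m * f2 y) (g1 - m *: g2) x.
Proof.
move=> h1 h2 e e0.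
have e1 : 0 < e / 2 by rewrite divr_gt0.
have m0 : 0 < `|m| + 1 by rewrite ltr_pwDr // normr_ge0.
have e2 : 0 < e / 2 / (`|m| + 1) by rewrite divr_gt0.
have [d1 d10 hd1] := h1 _ e1; have [d2 d20 hd2] := h2 _ e2.
exists (Num.min d1 d2); first by rewrite lt_min d10.
move=> y Sy; rewrite lt_min => /andP [hy1 hy2].
have k1 := hd1 _ Sy hy1; have k2 := hd2 _ Sy hy2.
set nn := enorm (y - x) in k1 k2 *.
have nn0 : 0 <= nn by exact: enorm_ge0.
rewrite dotvBl dotvZl.
set a1 := f1 y - f1 x - dotv g1 (y - x) in k1.
set a2 := f2 y - f2 x - dotv g2 (y - x) in k2.
have -> : f1 y - m * f2 y - (f1 x - m * f2 x) - (dotv g1 (y - x) - m * dotv g2 (y - x))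
   = a1 - m * a2 by rewrite /a1 /a2; lra.
apply: (le_trans (ler_normB _ _)); rewrite normrM.
have : `|m| * `|a2| <= `|m| * (e / 2 / (`|m| + 1) * nn) by rewrite ler_wpM2l ?normr_ge0.
have : `|m| * (e / 2 / (`|m| + 1) * nn) <= e / 2 * nn.
  have hq : e / 2 / (`|m| + 1) * (`|m| + 1) = e / 2 by rewrite divfK // gt_eqF.
  have hq0 : 0 <= e / 2 / (`|m| + 1) * nn by rewrite mulr_ge0 // ltW.
  rewrite -[X in _ <= X * nn]hq; lra.
lra.
Qed.

Lemma strong_bregman {S : set 'rV[R]_n} {psi gp rho x y} :
  convexS S -> S x -> S y -> 0 < rho -> strongly_convex_on S psi rho ->
  has_grad_within S psi (gp y) y ->
  rho / 2 * sqnorm (x - y) <= bregman psi gp x y.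
Proof.
move=> cS Sx Sy r0 sc hg.
rewrite leNgt; apply/negP => hgap.
set s := sqnorm (x - y) in hgap.
set D := bregman psi gp x y in hgap.
set gap := rho / 2 * s - D.
have gap0 : 0 < gap by rewrite /gap; lra.
set nn := enorm (x - y).
have nn0 : 0 <= nn by exact: enorm_ge0.
have s0 : 0 <= s by exact: sqnorm_ge0.
have e0 : 0 < gap / (4 * (nn + 1)) by rewrite divr_gt0 // mulr_gt0 // ltr_pwDr.
have [delta d0 hd] := hg _ e0.
have rs0 : 0 < rho * s + 1 by rewrite ltr_pwDr // mulr_ge0 // ltW.
set l := Num.min (Num.min 1 (delta / (nn + 1))) (gap / (rho * s + 1)).
have l0 : 0 < l by rewrite !lt_min ltr01 !divr_gt0 // ltr_pwDr.
have l1 : l <= 1 by rewrite !ge_min lexx.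
have l2 : l <= delta / (nn + 1) by rewrite !ge_min lexx orbT.
have l3 : l <= gap / (rho * s + 1) by rewrite !ge_min lexx !orbT.
have Sz := cS x y Sx Sy l (andb_true_intro (conj (ltW l0) l1)).
have hlt : l * nn < delta.
  have : l * nn <= delta / (nn + 1) * nn by rewrite ler_wpM2r.
  move=> h; apply: (le_lt_trans h).
  rewrite mulrAC ltr_pdivrMr ?ltr_pwDr //; lra.
have := hd _ Sz; rewrite comb_sub enormZ ?(ltW l0) // dotvZr -/nn => /(_ hlt).
rewrite ler_norml => /andP [h1 _].
have hs := sc x y Sx Sy l (andb_true_intro (conj (ltW l0) l1)).
rewrite -/s in hs.
have key : 0 <= l * (D - rho / 2 * s + rho / 2 * l * s + gap / (4 * (nn + 1)) * nn).
  rewrite /D /bregman; lra.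
have {}key : 0 <= D - rho / 2 * s + rho / 2 * l * s + gap / (4 * (nn + 1)) * nn.
  by rewrite -(pmulr_rge0 _ l0).
have k1 : gap / (4 * (nn + 1)) * nn <= gap / 4.
  have hq : gap / (4 * (nn + 1)) * (4 * (nn + 1)) = gap.
    by rewrite divfK // gt_eqF // mulr_gt0 // ltr_pwDr.
  have hq0 : 0 <= gap / (4 * (nn + 1)) by rewrite ltW.
  rewrite -[X in _ <= X / 4]hq; lra.
have k2 : rho / 2 * l * s <= gap / 2.
  have hw : gap / (rho * s + 1) * (rho * s + 1) = gap by rewrite divfK // gt_eqF.
  have hw0 : 0 <= gap / (rho * s + 1) by rewrite ltW // divr_gt0.
  have rs : 0 <= rho * s by rewrite mulr_ge0 // ltW.
  have : rho * s * l <= rho * s * (gap / (rho * s + 1)) by rewrite ler_wpM2l.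
  rewrite -[X in _ <= X / 2]hw; lra.
move: k1 k2 key gap0; rewrite /gap; lra.
Qed.

Lemma sqnorm_sym (x y : 'rV[R]_n) : sqnorm (x - y) = sqnorm (y - x).
Proof. by rewrite -opprB /sqnorm dotvNl dotvNr opprK. Qed.

Lemma young (a b : 'rV[R]_n) (P Q : R) :
  2 * P * Q * dotv a b <= P ^+ 2 * sqnorm a + Q ^+ 2 * sqnorm b.
Proof.
have := sqnorm_ge0 (P *: a - Q *: b).
rewrite /sqnorm !dotvBl !dotvBr !dotvZl !dotvZr (dotvC b a); lra.
Qed.
End Helpers.

Lemma sum_lin (R : realType) (N : nat) (Dn Dt Ds E M Y : 'I_N -> R) (a b e : R) :
  (forall i, Dn i <= Dt i - Ds i + e * (M i + Y i) + a * Ds i - b * Dt i - b * E i) ->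
  \sum_(i < N) Dn i <= \sum_(i < N) Dt i - \sum_(i < N) Ds i
    + e * (\sum_(i < N) M i + \sum_(i < N) Y i) + a * \sum_(i < N) Ds i
    - b * \sum_(i < N) Dt i - b * \sum_(i < N) E i.
Proof.
move=> h; apply: le_trans (ler_sum _ (fun i _ => h i)) _.
rewrite !sumrB !big_split /= -!mulr_sumr big_split /= sumrN; exact: lexx.
Qed.

Lemma final_scalar (R : realType) (L rho beta gamma mu eta Dn Dt Ds E M Y A B C : R) :
  0 < rho -> 0 < beta -> 0 < gamma -> 0 < mu -> 0 < eta ->
  eta < 2 * mu * gamma * rho ^+ 2
        / (mu ^+ 2 * gamma * rho ^+ 2 * (gamma + 2 * beta) + 8 * L ^+ 2) ->
  Dn <= Dt - Ds + eta * (M + Y) + eta * mu * beta * Ds - eta * mu * gamma * Dt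
        - eta * mu * gamma * E ->
  M <= 0 -> 0 <= E ->
  2 * (2 * mu * gamma * rho) * (4 * L ^+ 2 + mu ^+ 2 * gamma ^+ 2 * rho ^+ 2) * Y
    <= (2 * mu * gamma * rho) ^+ 2 * A + (4 * L ^+ 2 + mu ^+ 2 * gamma ^+ 2 * rho ^+ 2) ^+ 2 * B ->
  A <= L ^+ 2 * C -> rho / 2 * C <= Dt -> rho / 2 * B <= Ds -> 0 <= B -> 0 <= C ->
  Dn <= (1 - eta * mu * gamma / 2) * Dt.
Proof.
move=> r0 b0 g0 m0 e0 eb h1 h2 h3 h4 h5 h6 h7 B0 C0.
pose P := 2 * mu * gamma * rho.
pose Q := 4 * L ^+ 2 + mu ^+ 2 * gamma ^+ 2 * rho ^+ 2.
have P0 : 0 < P by rewrite /P !mulr_gt0.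
have L0 := sqr_ge0 L.
have mgr : 0 < mu ^+ 2 * gamma ^+ 2 * rho ^+ 2 by rewrite !mulr_gt0 ?exprn_gt0.
have Q0 : 0 < Q by rewrite /Q; lra.
have Dt0 : 0 <= Dt by apply: le_trans h6; rewrite mulr_ge0 // divr_ge0 // ltW.
have Ds0 : 0 <= Ds by apply: le_trans h7; rewrite mulr_ge0 // divr_ge0 // ltW.
have den0 : 0 < mu ^+ 2 * gamma * rho ^+ 2 * (gamma + 2 * beta) + 8 * L ^+ 2.
  have : 0 < mu ^+ 2 * gamma * rho ^+ 2 * (gamma + 2 * beta) by rewrite !mulr_gt0 ?exprn_gt0 //; lra.
  lra.
have ebd : eta * (Q + 2 * mu ^+ 2 * beta * gamma * rho ^+ 2) <= 2 * mu * gamma * rho ^+ 2.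
  move: eb; rewrite ltr_pdivlMr // => eb.
  have : eta * (Q + 2 * mu ^+ 2 * beta * gamma * rho ^+ 2) <=
         eta * (mu ^+ 2 * gamma * rho ^+ 2 * (gamma + 2 * beta) + 8 * L ^+ 2).
    apply: ler_wpM2l; [exact: ltW | rewrite /Q; lra].
  lra.
have PQr0 : 0 < P * Q * rho by rewrite !mulr_gt0.
have k1 := ler_wpM2l (ltW PQr0) h1.
have k2 : P * Q * rho * (eta * M) <= 0 by rewrite mulr_ge0_le0 ?(ltW PQr0) // mulr_ge0_le0 // ltW.
have k3 : 0 <= P * Q * rho * (eta * mu * gamma * E) by rewrite !mulr_ge0 // ltW.
have hA : P ^+ 2 * (rho * A) <= P ^+ 2 * (rho * (L ^+ 2 * C)).
  by apply: ler_wpM2l; [exact: sqr_ge0| apply: ler_wpM2l; [exact: ltW|]].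
have k4 : P * Q * rho * Y <= P ^+ 2 * L ^+ 2 * Dt + Q ^+ 2 * Ds.
  have hC : P ^+ 2 * L ^+ 2 * (rho * C) <= P ^+ 2 * L ^+ 2 * (2 * Dt).
    apply: ler_wpM2l; [by rewrite mulr_ge0 ?sqr_ge0 | lra].
  have hB : Q ^+ 2 * (rho * B) <= Q ^+ 2 * (2 * Ds).
    apply: ler_wpM2l; [exact: sqr_ge0 | lra].
  have h4' := ler_wpM2l (ltW r0) h4.
  rewrite -/P -/Q in h4'.
  lra.
have k5 := ler_wpM2l (ltW e0) k4.
have k6 : Q * Ds * (eta * (Q + 2 * mu ^+ 2 * beta * gamma * rho ^+ 2) - 2 * mu * gamma * rho ^+ 2) <= 0.
  rewrite mulr_ge0_le0 ?mulr_ge0 ?(ltW Q0) //; lra.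
have k7 : 0 <= eta * P * mu * gamma * rho * (mu ^+ 2 * gamma ^+ 2 * rho ^+ 2) * Dt.
  by rewrite !mulr_ge0 ?sqr_ge0 // ltW.
have : P * Q * rho * (Dn - (1 - eta * mu * gamma / 2) * Dt) <= 0.
  move: k1 k2 k3 k5 k6 k7; rewrite /P /Q; lra.
by rewrite pmulr_rle0 // subr_le0.
Qed.

Theorem theorem4 (R : realType) (N : nat) (d : 'I_N -> nat)
  (X : forall i : 'I_N, set 'rV[R]_(d i))
  (v : 'I_N -> profile d -> R)
  (gradv : forall i : 'I_N, profile d -> 'rV[R]_(d i))
  (psi : forall i : 'I_N, 'rV[R]_(d i) -> R)
  (gpsi : forall i : 'I_N, 'rV[R]_(d i) -> 'rV[R]_(d i))
  (G : forall i : 'I_N, 'rV[R]_(d i) -> 'rV[R]_(d i) -> R)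
  (gradG : forall i : 'I_N, 'rV[R]_(d i) -> 'rV[R]_(d i) -> 'rV[R]_(d i))
  (L rho beta gamma mu eta : R)
  (sigma pstar : profile d) (pi : nat -> profile d) :
  (* strategy sets: nonempty, compact, convex *)
  (forall i, X i !=set0) ->
  (forall i, compactS (X i)) ->
  (forall i, convexS (X i)) ->
  (* gradv i is the block gradient of v_i w.r.t. pi_i *)
  (forall p : profile d, in_profile X p -> forall i,
      has_grad_within (X i) (fun x => v i (upd p i x)) (gradv i p) (p i)) ->
  (* monotone game *)
  (forall p q : profile d, in_profile X p -> in_profile X q ->
      \sum_(i < N) dotv (gradv i p - gradv i q) (p i - q i) <= 0) ->
  (* L-smooth game *)
  (forall p q : profile d, in_profile X p -> in_profile X q ->
      \sum_(i < N) sqnorm (gradv i p - gradv i q)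
        <= L ^+ 2 * \sum_(i < N) sqnorm (p i - q i)) ->
  (* regularizer: differentiable, rho-strongly convex *)
  0 < rho ->
  (forall i x, X i x -> has_grad_within (X i) (psi i) (gpsi i x) x) ->
  (forall i, strongly_convex_on (X i) (psi i) rho) ->
  (* perturbation G *)
  (forall i x s, X i x -> X i s -> 0 <= G i x s) ->
  (forall i s, X i s -> G i s s = 0) ->
  (forall i s, X i s -> strictly_convex_on (X i) (fun x => G i x s)) ->
  (forall i s x, X i s -> X i x ->
      has_grad_within (X i) (fun y => G i y s) (gradG i x s) x) ->
  (* Assumption A with beta, gamma in (0, oo) *)
  0 < beta -> 0 < gamma ->
  (forall i s x x', X i s -> X i x -> X i x' ->
      gamma * bregman (psi i) (gpsi i) x' x
        <= G i x' s - G i x s - dotv (gradG i x s) (x' - x)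
      /\ G i x' s - G i x s - dotv (gradG i x s) (x' - x)
        <= beta * bregman (psi i) (gpsi i) x' x) ->
  (* perturbed equilibrium pi^{mu,sigma} *)
  0 < mu ->
  in_profile X sigma ->
  in_profile X pstar ->
  (forall i, is_maximizer (X i)
      (fun x => v i (upd pstar i x) - mu * G i x (sigma i)) (pstar i)) ->
  (* learning rate *)
  0 < eta ->
  eta < 2 * mu * gamma * rho ^+ 2
        / (mu ^+ 2 * gamma * rho ^+ 2 * (gamma + 2 * beta) + 8 * L ^+ 2) ->
  (* MD-SP with full feedback *)
  in_profile X (pi 0%N) ->
  (forall (t : nat) (i : 'I_N), is_maximizer (X i)
      (fun x => eta * dotv (gradv i (pi t) - mu *: gradG i (pi t i) (sigma i)) x
                - bregman (psi i) (gpsi i) x (pi t i))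
      (pi t.+1 i)) ->
  forall t : nat, (1 <= t)%N ->
    bregman_prof psi gpsi pstar (pi t)
      <= bregman_prof psi gpsi pstar (pi 0%N) * (1 - eta * mu * gamma / 2) ^+ t.
Proof.
move=> hne hcomp hconv hgv hmono hsmooth r0 hgpsi hsc hG0 hGss hGsc hgG b0 g0 hA m0
  hsig hstar heq e0 ebound hpi0 hstep.
have hin : forall t, in_profile X (pi t).
  by elim=> [|t _] //= i; case: (hstep t i).
pose c := 1 - eta * mu * gamma / 2.
have step : forall t, bregman_prof psi gpsi pstar (pi t.+1)
    <= c * bregman_prof psi gpsi pstar (pi t).
  move=> t.
  set p := pi t; set q := pi t.+1.
  have Xp := hin t; have Xq := hin t.+1.
  rewrite -/p in Xp; rewrite -/q in Xq.
  have PI : forall i,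
    bregman (psi i) (gpsi i) (pstar i) (q i) <=
      bregman (psi i) (gpsi i) (pstar i) (p i) - bregman (psi i) (gpsi i) (q i) (p i)
      + eta * (dotv (gradv i p - gradv i pstar) (p i - pstar i)
               + dotv (gradv i p - gradv i pstar) (q i - p i))
      + eta * mu * beta * bregman (psi i) (gpsi i) (q i) (p i)
      - eta * mu * gamma * bregman (psi i) (gpsi i) (pstar i) (p i)
      - eta * mu * gamma * bregman (psi i) (gpsi i) (q i) (pstar i).
    move=> i.
    set g := gradv i p - mu *: gradG i (p i) (sigma i).
    have OPT := first_order (hconv i) (hstep t i)
      (@grad_affine _ _ _ _ _ _ _ (psi i (p i) - dotv (gpsi i (p i)) (p i))
         (eta *: g + gpsi i (p i)) (hgpsi i (q i) (Xq i)) _) (pstar i) (hstar i).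
    have EQ := first_order (hconv i) (heq i)
      (@grad_sub _ _ _ _ _ _ _ _ mu (hgv pstar hstar i) (hgG i (sigma i) (pstar i) (hsig i) (hstar i)))
      (q i) (Xq i).
    have A1 := (hA i (sigma i) (p i) (q i) (hsig i) (Xp i) (Xq i)).2.
    have A2 := (hA i (sigma i) (pstar i) (q i) (hsig i) (hstar i) (Xq i)).1.
    have A4 := (hA i (sigma i) (p i) (pstar i) (hsig i) (Xp i) (hstar i)).1.
    rewrite -/p -/q in OPT.
    have {}OPT : dotv (eta *: g + gpsi i (p i) - gpsi i (q i)) (pstar i - q i) <= 0.
      apply: OPT => y; rewrite /bregman /g !(dotvBl, dotvDl, dotvZl, dotvNl, dotvBr, dotvDr, dotvNr); lra.
    have em0 : 0 <= eta * mu by rewrite mulr_ge0 // ltW.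
    have EQ' : eta * dotv (gradv i pstar - mu *: gradG i (pstar i) (sigma i)) (q i - pstar i) <= 0.
      by rewrite mulr_ge0_le0 // ltW.
    have A1' := ler_wpM2l em0 A1.
    have A2' := ler_wpM2l em0 A2.
    have A4' := ler_wpM2l em0 A4.
    move: OPT EQ' A1' A2' A4'; rewrite /bregman /g.
    rewrite !(dotvBl, dotvDl, dotvZl, dotvNl, dotvBr, dotvDr, dotvNr).
    lra.
  have SB : forall (i : 'I_N) (x y : 'rV_(d i)), X i x -> X i y ->
      rho / 2 * sqnorm (x - y) <= bregman (psi i) (gpsi i) x y.
    move=> i x y Xx Xy.
    exact: strong_bregman (hconv i) Xx Xy r0 (hsc i) (hgpsi i _ Xy).
  have h1 := @sum_lin R N
    (fun i => bregman (psi i) (gpsi i) (pstar i) (q i))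
    (fun i => bregman (psi i) (gpsi i) (pstar i) (p i))
    (fun i => bregman (psi i) (gpsi i) (q i) (p i))
    (fun i => bregman (psi i) (gpsi i) (q i) (pstar i))
    (fun i => dotv (gradv i p - gradv i pstar) (p i - pstar i))
    (fun i => dotv (gradv i p - gradv i pstar) (q i - p i))
    (eta * mu * beta) (eta * mu * gamma) eta PI.
  have hM := hmono p pstar Xp hstar.
  have hE : 0 <= \sum_(i < N) bregman (psi i) (gpsi i) (q i) (pstar i).
    apply: sumr_ge0 => i _; apply: le_trans (SB i _ _ (Xq i) (hstar i)).
    by rewrite mulr_ge0 ?sqnorm_ge0 // divr_ge0 // ltW.
  have hY : 2 * (2 * mu * gamma * rho) * (4 * L ^+ 2 + mu ^+ 2 * gamma ^+ 2 * rho ^+ 2) *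
      \sum_(i < N) dotv (gradv i p - gradv i pstar) (q i - p i) <=
      (2 * mu * gamma * rho) ^+ 2 * \sum_(i < N) sqnorm (gradv i p - gradv i pstar) +
      (4 * L ^+ 2 + mu ^+ 2 * gamma ^+ 2 * rho ^+ 2) ^+ 2 * \sum_(i < N) sqnorm (q i - p i).
    rewrite !mulr_sumr -big_split; apply: ler_sum => i _; exact: young.
  have hS := hsmooth p pstar Xp hstar.
  have hC : rho / 2 * \sum_(i < N) sqnorm (p i - pstar i) <=
      \sum_(i < N) bregman (psi i) (gpsi i) (pstar i) (p i).
    rewrite mulr_sumr; apply: ler_sum => i _; rewrite sqnorm_sym.
    exact: SB i _ _ (hstar i) (Xp i).
  have hB : rho / 2 * \sum_(i < N) sqnorm (q i - p i) <=
      \sum_(i < N) bregman (psi i) (gpsi i) (q i) (p i).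
    rewrite mulr_sumr; apply: ler_sum => i _.
    exact: SB i _ _ (Xq i) (Xp i).
  have hB0 : 0 <= \sum_(i < N) sqnorm (q i - p i).
    by apply: sumr_ge0 => i _; exact: sqnorm_ge0.
  have hC0 : 0 <= \sum_(i < N) sqnorm (p i - pstar i).
    by apply: sumr_ge0 => i _; exact: sqnorm_ge0.
  exact: (@final_scalar _ _ _ _ _ _ _ _ _ _ _ _ _ _ _ _ r0 b0 g0 m0 e0 ebound h1 hM hE hY hS hC hB hB0 hC0).
have all : forall t, bregman_prof psi gpsi pstar (pi t)
    <= bregman_prof psi gpsi pstar (pi 0%N) * c ^+ t.
  have c0 : 0 <= c.
    have den0 : 0 < mu ^+ 2 * gamma * rho ^+ 2 * (gamma + 2 * beta) + 8 * L ^+ 2.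
      have := sqr_ge0 L.
      have : 0 < mu ^+ 2 * gamma * rho ^+ 2 * (gamma + 2 * beta).
        by rewrite !mulr_gt0 ?exprn_gt0 //; lra.
      lra.
    move: ebound; rewrite ltr_pdivlMr // => eb.
    have h1 : eta * (mu ^+ 2 * gamma ^+ 2 * rho ^+ 2) <=
       eta * (mu ^+ 2 * gamma * rho ^+ 2 * (gamma + 2 * beta) + 8 * L ^+ 2).
      apply: ler_wpM2l; first exact: ltW.
      have := sqr_ge0 L.
      have : 0 <= mu ^+ 2 * gamma * rho ^+ 2 * (2 * beta).
        by rewrite !mulr_ge0 ?sqr_ge0 // ltW.
      lra.
    have hp : 0 < mu * gamma * rho ^+ 2 by rewrite !mulr_gt0 // exprn_gt0.
    have : (eta * mu * gamma - 2) * (mu * gamma * rho ^+ 2) < 0 by lra.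
    rewrite pmulr_llt0 // /c; lra.
  elim=> [|t IH]; first by rewrite expr0 mulr1.
  apply: le_trans (step t) _.
  by rewrite exprS mulrCA ler_wpM2l.
by move=> t _; exact: all.
Qed.
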